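(* If $\Gamma\vdash t:A$ is derivable in the simply typed distributive $\lambda$-calculus, then $t$ is strongly normalizing with respect to $\to_{\mathsf{dist}}$.
   Context: Terms: $t,s,u ::= x \mid \lambda x.t \mid ts \mid \langle t,s\rangle \mid \pi_1 t \mid \pi_2 t$ (up to $\alpha$-renaming); $t\{x:=s\}$ is capture-avoiding substitution. Top-level rules: $(\lambda x.t)s \mapsto t\{x:=s\}$; $\pi_i\langle t_1,t_2\rangle \mapsto t_i$ ($i=1,2$); $\langle t,s\rangle u \mapsto \langle tu, su\rangle$; $\pi_i(\lambda x.t)\mapsto \lambda x.\pi_i t$ ($i=1,2$); $\to_{\mathsf{dist}}$ is the closure of these rules under all term constructors. Types: $A ::= \tau \mid A\Rightarrow A \mid A\wedge A$ with $\tau$ a single atomic type. The relation $\equiv$ on types is the smallest equivalence relation containing $A\Rightarrow (B\wedge C)\equiv (A\Rightarrow B)\wedge(A\Rightarrow C)$ for all $A,B,C$ and closed under congruence for $\Rightarrow$ and $\wedge$ in both arguments. Typing rules: $\Gamma,x:A\vdash x:A$; if $\Gamma\vdash t:A$ and $A\equiv B$ then $\Gamma\vdash t:B$; if $\Gamma,x:A\vdash t:B$ then $\Gamma\vdash \lambda x.t:A\Rightarrow B$; if $\Gamma\vdash t:A\Rightarrow B$ and $\Gamma\vdash s:A$ then $\Gamma\vdash ts:B$; if $\Gamma\vdash t:A$ and $\Gamma\vdash s:B$ then $\Gamma\vdash\langle t,s\rangle:A\wedge B$; if $\Gamma\vdash t:A\wedge B$ then $\Gamma\vdash\pi_1 t:A$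 and $\Gamma\vdash \pi_2 t:B$. *)

(* Defs.v *)
From Stdlib Require Import Arith List.
Import ListNotations.

(* Terms up to alpha-renaming: de Bruijn indices. *)
Inductive tm : Type :=
| Var : nat -> tm
| Lam : tm -> tm
| App : tm -> tm -> tm
| Pair : tm -> tm -> tm
| Pi1 : tm -> tm
| Pi2 : tm -> tm.

Fixpoint lift (c : nat) (t : tm) : tm :=
  match t with
  | Var i => if i <? c then Var i else Var (S i)
  | Lam b => Lam (lift (S c) b)
  | App a b => App (lift c a) (lift c b)
  | Pair a b => Pair (lift c a) (lift c b)
  | Pi1 a => Pi1 (lift c a)
  | Pi2 a => Pi2 (lift c a)
  end.

(* subst j s t : capture-avoiding substitution of s for index j in t,
   decrementing the free indices above j (the binder is consumed). *)
Fixpoint subst (j : nat) (s : tm) (t : tm) : tm :=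
  match t with
  | Var i => if i =? j then s else if j <? i then Var (pred i) else Var i
  | Lam b => Lam (subst (S j) (lift 0 s) b)
  | App a b => App (subst j s a) (subst j s b)
  | Pair a b => Pair (subst j s a) (subst j s b)
  | Pi1 a => Pi1 (subst j s a)
  | Pi2 a => Pi2 (subst j s a)
  end.

(* t{x:=s} where x is the variable bound by the enclosing lambda *)
Definition subst0 (t s : tm) : tm := subst 0 s t.

Inductive top_step : tm -> tm -> Prop :=
| ts_beta : forall t s, top_step (App (Lam t) s) (subst0 t s)
| ts_pi1 : forall t1 t2, top_step (Pi1 (Pair t1 t2)) t1
| ts_pi2 : forall t1 t2, top_step (Pi2 (Pair t1 t2)) t2
| ts_app_pair : forall t s u, top_step (App (Pair t s) u) (Pair (App t u) (App s u))
| ts_pi1_lam : forall t, top_step (Pi1 (Lam t)) (Lam (Pi1 t))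
| ts_pi2_lam : forall t, top_step (Pi2 (Lam t)) (Lam (Pi2 t)).

Inductive dist_step : tm -> tm -> Prop :=
| ds_top : forall t t', top_step t t' -> dist_step t t'
| ds_lam : forall t t', dist_step t t' -> dist_step (Lam t) (Lam t')
| ds_appl : forall t t' s, dist_step t t' -> dist_step (App t s) (App t' s)
| ds_appr : forall t s s', dist_step s s' -> dist_step (App t s) (App t s')
| ds_pairl : forall t t' s, dist_step t t' -> dist_step (Pair t s) (Pair t' s)
| ds_pairr : forall t s s', dist_step s s' -> dist_step (Pair t s) (Pair t s')
| ds_pi1 : forall t t', dist_step t t' -> dist_step (Pi1 t) (Pi1 t')
| ds_pi2 : forall t t', dist_step t t' -> dist_step (Pi2 t) (Pi2 t').

Inductive SN : tm -> Prop :=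
| SN_intro : forall t, (forall t', dist_step t t' -> SN t') -> SN t.

Inductive ty : Type :=
| Tau : ty
| Arr : ty -> ty -> ty
| And : ty -> ty -> ty.

Inductive ty_equiv : ty -> ty -> Prop :=
| te_dist : forall A B C, ty_equiv (Arr A (And B C)) (And (Arr A B) (Arr A C))
| te_refl : forall A, ty_equiv A A
| te_sym : forall A B, ty_equiv A B -> ty_equiv B A
| te_trans : forall A B C, ty_equiv A B -> ty_equiv B C -> ty_equiv A C
| te_arr : forall A A' B B', ty_equiv A A' -> ty_equiv B B' -> ty_equiv (Arr A B) (Arr A' B')
| te_and : forall A A' B B', ty_equiv A A' -> ty_equiv B B' -> ty_equiv (And A B) (And A' B').

(* contexts: list of types, index i gives the type of de Bruijn variable i *)
Definition ctx := list ty.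

Inductive has_type : ctx -> tm -> ty -> Prop :=
| ht_var : forall G i A, nth_error G i = Some A -> has_type G (Var i) A
| ht_equiv : forall G t A B, has_type G t A -> ty_equiv A B -> has_type G t B
| ht_lam : forall G t A B, has_type (A :: G) t B -> has_type G (Lam t) (Arr A B)
| ht_app : forall G t s A B, has_type G t (Arr A B) -> has_type G s A -> has_type G (App t s) B
| ht_pair : forall G t s A B, has_type G t A -> has_type G s B -> has_type G (Pair t s) (And A B)
| ht_pi1 : forall G t A B, has_type G t (And A B) -> has_type G (Pi1 t) A
| ht_pi2 : forall G t A B, has_type G t (And A B) -> has_type G (Pi2 t) B.

(* Main.v *)
Require Import Defs.
From Stdlib Require Import Arith List Lia.
Import ListNotations.

Ltac cmp := match goal with
  | |- context [?x =? ?y] => destruct (Nat.eqb_spec x y)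
  | |- context [?x <? ?y] => destruct (Nat.ltb_spec x y)
  end.

Ltac arith := repeat (cmp; cbn [subst lift pred]); try reflexivity; try (exfalso; lia); try (f_equal; lia).

Lemma lift_lift : forall t i c, i <= c -> lift i (lift c t) = lift (S c) (lift i t).
Proof.
  induction t; intros i c H; simpl; try (f_equal; auto; fail).
  - arith.
  - f_equal; apply IHt; lia.
Qed.

Lemma lift_subst : forall v i j u, i <= j ->
  lift i (subst j u v) = subst (S j) (lift i u) (lift i v).
Proof.
  induction v; intros i j u H; simpl; try (f_equal; auto; fail).
  - arith.
  - f_equal. rewrite IHv by lia. f_equal. symmetry. apply lift_lift. lia.
Qed.

Lemma subst_lift : forall t k v, subst k v (lift k t) = t.
Proof.
  induction t; intros k v; simpl; try (f_equal; auto; fail).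
  arith.
Qed.

Lemma subst_subst : forall t k j u v, k <= j ->
  subst j u (subst k v t) = subst k (subst j u v) (subst (S j) (lift k u) t).
Proof.
  induction t; intros k j u v H; simpl; try (f_equal; auto; fail).
  - repeat (cmp; cbn [subst lift pred]); try reflexivity; try (exfalso; lia); try (f_equal; lia).
    + subst. rewrite subst_lift. reflexivity.
  - f_equal. rewrite IHt by lia. f_equal.
    + symmetry. apply lift_subst. lia.
    + f_equal. symmetry. apply lift_lift. lia.
Qed.

Lemma step_subst : forall s s', dist_step s s' -> forall j u,
  dist_step (subst j u s) (subst j u s').
Proof.
  induction 1; intros j u; simpl; try (constructor; auto; fail).
  destruct H; simpl; apply ds_top; try constructor.
  unfold subst0. rewrite (subst_subst t 0 j u s) by lia. constructor.
Qed.

Lemma SN_subst_inv : forall x, SN x -> forall j u s, x = subst j u s -> SN s.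
Proof.
  induction 1; intros j u s E; subst. constructor. intros s' Hs.
  eapply H0; [apply step_subst; eauto | reflexivity].
Qed.

Lemma SN_app_inv : forall x, SN x -> forall t u, x = App t u -> SN t.
Proof.
  induction 1; intros t0 u E; subst. constructor. intros t' Ht.
  eapply H0; [apply ds_appl; eauto | reflexivity].
Qed.

Lemma SN_pi1_inv : forall x, SN x -> forall t, x = Pi1 t -> SN t.
Proof.
  induction 1; intros t0 E; subst. constructor. intros t' Ht.
  eapply H0; [apply ds_pi1; eauto | reflexivity].
Qed.

Definition neutral (t : tm) : Prop :=
  match t with Lam _ | Pair _ _ => False | _ => True end.

Fixpoint R (T : ty) (t : tm) : Prop :=
  match T with
  | Tau => SN t
  | Arr A B => forall u, R A u -> R B (App t u)
  | And A B => R A (Pi1 t) /\ R B (Pi2 t)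
  end.

Lemma CR : forall T,
  (forall t, R T t -> SN t) /\
  (forall t t', R T t -> dist_step t t' -> R T t') /\
  (forall t, neutral t -> (forall t', dist_step t t' -> R T t') -> R T t).
Proof.
  induction T as [|A [A1 [A2 A3]] B [B1 [B2 B3]]|A [A1 [A2 A3]] B [B1 [B2 B3]]].
  - simpl. split; [auto|split].
    + intros t t' H Hs. inversion H; auto.
    + intros t _ H. constructor. auto.
  - simpl. split; [|split].
    + intros t H.
      assert (HV : R A (Var 0)).
      { apply A3; simpl; auto. intros t' Hs. inversion Hs. inversion H0. }
      apply (SN_app_inv (App t (Var 0)) (B1 _ (H _ HV)) t (Var 0) eq_refl).
    + intros t t' H Hs u Hu. apply (B2 (App t u)); [apply H; auto| apply ds_appl; auto].
    + intros t Hn H u Hu. assert (Su : SN u) by auto.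
      induction Su as [u _ IH].
      apply B3; simpl; auto. intros x Hx. inversion Hx; subst.
      * inversion H0; subst; simpl in Hn; contradiction.
      * apply H; auto.
      * apply IH; eauto.
  - simpl. split; [|split].
    + intros t [H _]. apply A1 in H. eapply SN_pi1_inv; eauto.
    + intros t t' [H1 H2] Hs. split.
      * eapply A2; [eauto|apply ds_pi1; auto].
      * eapply B2; [eauto|apply ds_pi2; auto].
    + intros t Hn H. split.
      * apply A3; simpl; auto. intros x Hx. inversion Hx; subst.
        -- inversion H0; subst; simpl in Hn; contradiction.
        -- apply H; auto.
      * apply B3; simpl; auto. intros x Hx. inversion Hx; subst.
        -- inversion H0; subst; simpl in Hn; contradiction.
        -- apply H; auto.
Qed.

Lemma CR1 : forall T t, R T t -> SN t.
Proof. intro T. apply (CR T). Qed.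
Lemma CR2 : forall T t t', R T t -> dist_step t t' -> R T t'.
Proof. intro T. apply (CR T). Qed.
Lemma CR3 : forall T t, neutral t -> (forall t', dist_step t t' -> R T t') -> R T t.
Proof. intro T. apply (CR T). Qed.

Lemma R_var : forall T i, R T (Var i).
Proof.
  intros. apply CR3; simpl; auto. intros t' H. inversion H. inversion H0.
Qed.

Fixpoint distr (a b : ty) : ty :=
  match b with
  | And b1 b2 => And (distr a b1) (distr a b2)
  | _ => Arr a b
  end.

Fixpoint nf (A : ty) : ty :=
  match A with
  | Tau => Tau
  | Arr A B => distr (nf A) (nf B)
  | And A B => And (nf A) (nf B)
  end.

Lemma nf_equiv : forall A B, ty_equiv A B -> nf A = nf B.
Proof.
  induction 1; simpl; congruence.
Qed.

Lemma pair1_aux : forall T x, SN x -> forall y, SN y -> R T x -> R T (Pi1 (Pair x y)).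
Proof.
  intros T x Sx. induction Sx as [x _ IHx]. intros y Sy.
  induction Sy as [y Sy' IHy]. intros Hx.
  apply CR3; simpl; auto. intros z Hz. inversion Hz; subst.
  - inversion H; subst; auto.
  - inversion H0; subst.
    + inversion H.
    + apply IHx; auto. constructor; auto. eapply CR2; eauto.
    + apply IHy; auto.
Qed.

Lemma pair1 : forall T x y, R T x -> SN y -> R T (Pi1 (Pair x y)).
Proof. intros. apply pair1_aux; auto. eapply CR1; eauto. Qed.

Lemma pair2_aux : forall T y, SN y -> forall x, SN x -> R T y -> R T (Pi2 (Pair x y)).
Proof.
  intros T y Sy. induction Sy as [y _ IHy]. intros x Sx.
  induction Sx as [x Sx' IHx]. intros Hy.
  apply CR3; simpl; auto. intros z Hz. inversion Hz; subst.
  - inversion H; subst; auto.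
  - inversion H0; subst.
    + inversion H.
    + apply IHx; auto.
    + apply IHy; auto. constructor; auto. eapply CR2; eauto.
Qed.

Lemma pair2 : forall T x y, R T y -> SN x -> R T (Pi2 (Pair x y)).
Proof. intros. apply pair2_aux; auto. eapply CR1; eauto. Qed.

Lemma app_lemma : forall a b t u, R (distr a b) t -> R a u -> R b (App t u).
Proof.
  intros a b. induction b as [|b1 _ b2 _|b1 IH1 b2 IH2]; intros t u Ht Hu;
    try (exact (Ht u Hu));
  assert (St : SN t) by (eapply CR1; eauto).
  revert u Hu Ht. induction St as [t _ IHt]. intros u Hu Ht.
  assert (Su : SN u) by (eapply CR1; eauto).
  revert Hu. induction Su as [u _ IHu]. intros Hu.
  pose proof Ht as Ht0. simpl in Ht0. destruct Ht0 as [Ht1 Ht2]. simpl. split.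
  - apply CR3; simpl; auto. intros x Hx. inversion Hx; subst.
    + inversion H.
    + inversion H0; subst.
      * inversion H; subst.
        -- assert (HL : R (distr a b1) (Lam (Pi1 t0))).
           { eapply CR2; [exact Ht1| apply ds_top; constructor]. }
           pose proof (IH1 _ _ HL Hu) as HA.
           eapply CR2 in HA; [exact HA| apply ds_top; constructor].
        -- apply pair1.
           ++ apply IH1; auto. eapply CR2; [exact Ht1| apply ds_top; constructor].
           ++ eapply CR1. apply IH2; eauto. eapply CR2; [exact Ht2| apply ds_top; constructor].
      * apply IHt; auto. eapply CR2; eauto.
      * apply IHu; auto. eapply CR2; eauto.
  - apply CR3; simpl; auto. intros x Hx. inversion Hx; subst.
    + inversion H.
    + inversion H0; subst.
      * inversion H; subst.
        -- assert (HL : R (distr a b2) (Lam (Pi2 t0))).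
           { eapply CR2; [exact Ht2| apply ds_top; constructor]. }
           pose proof (IH2 _ _ HL Hu) as HA.
           eapply CR2 in HA; [exact HA| apply ds_top; constructor].
        -- apply pair2.
           ++ apply IH2; auto. eapply CR2; [exact Ht2| apply ds_top; constructor].
           ++ eapply CR1. apply IH1; eauto. eapply CR2; [exact Ht1| apply ds_top; constructor].
      * apply IHt; auto. eapply CR2; eauto.
      * apply IHu; auto. eapply CR2; eauto.
Qed.

Lemma SN_of_body : forall a b s, (forall u, R a u -> R b (subst0 s u)) -> SN s.
Proof.
  intros a b s H. apply (SN_subst_inv (subst 0 (Var 0) s)) with (j := 0) (u := Var 0); [|reflexivity].
  apply (CR1 b). apply H. apply R_var.
Qed.

Lemma beta_lemma : forall a b s, (forall u, R a u -> R b (subst0 s u)) ->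
  forall u, R a u -> R b (App (Lam s) u).
Proof.
  intros a b s H. assert (Ss : SN s) by (eapply SN_of_body; eauto).
  revert H. induction Ss as [s _ IHs]. intros H u Hu.
  assert (Su : SN u) by (eapply CR1; eauto).
  revert Hu. induction Su as [u _ IHu]. intros Hu.
  apply CR3; simpl; auto. intros x Hx. inversion Hx; subst.
  - match goal with Ht: top_step _ _ |- _ => inversion Ht; subst end. auto.
  - match goal with Hs: dist_step (Lam _) _ |- _ => inversion Hs; subst end.
    + match goal with Ht: top_step _ _ |- _ => inversion Ht end.
    + apply IHs; auto. intros v Hv. eapply CR2; [apply (H v Hv)|].
      unfold subst0. apply step_subst. auto.
  - apply IHu; auto. eapply CR2; eauto.
Qed.

Lemma lam_lemma : forall a b s, (forall u, R a u -> R b (subst0 s u)) ->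
  R (distr a b) (Lam s).
Proof.
  intros a b. induction b as [|b1 _ b2 _|b1 IH1 b2 IH2]; intros s H;
    try (exact (beta_lemma _ _ _ H)).
  assert (Ss : SN s) by (eapply SN_of_body; eauto).
  revert H. induction Ss as [s _ IHs]. intros H. simpl. split.
  - apply CR3; simpl; auto. intros x Hx. inversion Hx; subst.
    + match goal with Ht: top_step _ _ |- _ => inversion Ht; subst end. apply IH1. intros u Hu. exact (proj1 (H u Hu)).
    + match goal with Hs: dist_step (Lam _) _ |- _ => inversion Hs; subst end.
      * match goal with Ht: top_step _ _ |- _ => inversion Ht end.
      * apply IHs; auto. intros v Hv. eapply CR2; [apply (H v Hv)|].
        unfold subst0. apply step_subst. auto.
  - apply CR3; simpl; auto. intros x Hx. inversion Hx; subst.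
    + match goal with Ht: top_step _ _ |- _ => inversion Ht; subst end. apply IH2. intros u Hu. exact (proj2 (H u Hu)).
    + match goal with Hs: dist_step (Lam _) _ |- _ => inversion Hs; subst end.
      * match goal with Ht: top_step _ _ |- _ => inversion Ht end.
      * apply IHs; auto. intros v Hv. eapply CR2; [apply (H v Hv)|].
        unfold subst0. apply step_subst. auto.
Qed.

Definition up (sg : nat -> tm) : nat -> tm :=
  fun i => match i with 0 => Var 0 | S i => lift 0 (sg i) end.

Fixpoint msubst (sg : nat -> tm) (t : tm) : tm :=
  match t with
  | Var i => sg i
  | Lam b => Lam (msubst (up sg) b)
  | App a b => App (msubst sg a) (msubst sg b)
  | Pair a b => Pair (msubst sg a) (msubst sg b)
  | Pi1 a => Pi1 (msubst sg a)
  | Pi2 a => Pi2 (msubst sg a)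
  end.

Fixpoint upn (k : nat) (sg : nat -> tm) : nat -> tm :=
  match k with 0 => sg | S k => up (upn k sg) end.

Fixpoint liftn (k : nat) (u : tm) : tm :=
  match k with 0 => u | S k => lift 0 (liftn k u) end.

Definition scons (u : tm) (sg : nat -> tm) : nat -> tm :=
  fun i => match i with 0 => u | S i => sg i end.

Lemma msubst_id : forall t sg, (forall i, sg i = Var i) -> msubst sg t = t.
Proof.
  induction t; intros sg H; simpl; try (f_equal; auto; fail).
  f_equal. apply IHt. intros [|i]; simpl; auto. rewrite H. reflexivity.
Qed.

Lemma upn_var : forall k sg u i,
  subst k (liftn k u) (upn k (up sg) i) = upn k (scons u sg) i.
Proof.
  induction k; intros sg u i.
  - destruct i; simpl. reflexivity. apply subst_lift.
  - destruct i; simpl. reflexivity.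
    rewrite <- lift_subst by lia. rewrite IHk. reflexivity.
Qed.

Lemma msubst_scons_gen : forall t k sg u,
  subst k (liftn k u) (msubst (upn k (up sg)) t) = msubst (upn k (scons u sg)) t.
Proof.
  induction t; intros k sg u; simpl; try (f_equal; auto; fail).
  - apply upn_var.
  - f_equal. apply (IHt (S k)).
Qed.

Lemma msubst_scons : forall t sg u,
  subst0 (msubst (up sg) t) u = msubst (scons u sg) t.
Proof. intros. apply (msubst_scons_gen t 0). Qed.

Lemma fundamental : forall G t A, has_type G t A -> forall sg,
  (forall i B, nth_error G i = Some B -> R (nf B) (sg i)) ->
  R (nf A) (msubst sg t).
Proof.
  induction 1; intros sg Hsg; simpl.
  - apply Hsg; auto.
  - rewrite <- (nf_equiv _ _ H0). auto.
  - apply lam_lemma. intros u Hu. rewrite msubst_scons. apply IHhas_type.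
    intros [|i] C HC; simpl in *.
    + inversion HC; subst; auto.
    + apply Hsg; auto.
  - eapply app_lemma; [apply IHhas_type1; auto | apply IHhas_type2; auto].
  - split.
    + apply pair1; auto. eapply CR1; eauto.
    + apply pair2; auto. eapply CR1; eauto.
  - apply (IHhas_type sg Hsg).
  - apply (IHhas_type sg Hsg).
Qed.

Theorem theorem4 : forall (G : ctx) (t : tm) (A : ty), has_type G t A -> SN t.
Proof.
  intros G t A H.
  pose proof (fundamental _ _ _ H Var (fun i B _ => R_var _ i)) as HR.
  rewrite msubst_id in HR by auto. eapply CR1; eauto.
Qed.
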